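(* Let $R\in(0,\pi/2)$ and consider on $(0,\pi)$ the system $\boldsymbol f'=A\boldsymbol f$ with \[A=\frac{1}{\sin s}\begin{pmatrix}-3\cos s&3\cos s\\ \cos R-\cos s&\cos s-\cos R\end{pmatrix}.\] Then a fundamental matrix of solutions (whose columns are solutions) is \[\boldsymbol\phi(s)=\begin{pmatrix}1&(1-\cos R\cos s+\cos^2s)\csc^2s\,(\cot\frac s2)^{\cos R}\\ 1&(\cos^2s-\cos R\cos s-\frac13\sin^2R)\csc^2s\,(\cot\frac s2)^{\cos R}\end{pmatrix}.\] Moreover, if $\boldsymbol f=(f_1,f_2)$ is the solution with $\boldsymbol f(R)\sin^4R=\cos R\,(3,2)$ and $h(s):=f_2(s)\sin^3s$, then \[h(s)=\underline c\Big\{(1+2\csc^2R)\sin^3s+\big(\cos^2s-\cos R\cos s-\tfrac13\sin^2R\big)\sin s\Big(\frac{\cot(s/2)}{\cot(R/2)}\Big)^{\cos R}\Big\},\qquad \underline c:=\frac{3\cos R\csc^2R}{3+\sin^2R}.\] *)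

(* Defs.v *)
From Stdlib Require Import Reals.
Open Scope R_scope.

Definition csc (x : R) : R := / sin x.
Definition cot (x : R) : R := cos x / sin x.

Definition A11 (R0 s : R) : R := (- 3 * cos s) / sin s.
Definition A12 (R0 s : R) : R := (3 * cos s) / sin s.
Definition A21 (R0 s : R) : R := (cos R0 - cos s) / sin s.
Definition A22 (R0 s : R) : R := (cos s - cos R0) / sin s.

Definition is_solution (R0 : R) (f1 f2 : R -> R) : Prop :=
  forall s, 0 < s < PI ->
    derivable_pt_lim f1 s (A11 R0 s * f1 s + A12 R0 s * f2 s) /\
    derivable_pt_lim f2 s (A21 R0 s * f1 s + A22 R0 s * f2 s).

(* Entries of the proposed fundamental matrix phi(s);
   (cot (s/2))^(cos R) is the real power, cot(s/2) > 0 on (0,pi). *)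
Definition phi11 (R0 s : R) : R := 1.
Definition phi21 (R0 s : R) : R := 1.
Definition phi12 (R0 s : R) : R :=
  (1 - cos R0 * cos s + (cos s)^2) * (csc s)^2 * Rpower (cot (s/2)) (cos R0).
Definition phi22 (R0 s : R) : R :=
  ((cos s)^2 - cos R0 * cos s - / 3 * (sin R0)^2) * (csc s)^2
    * Rpower (cot (s/2)) (cos R0).

Definition fundamental_matrix (R0 : R) : Prop :=
  is_solution R0 (phi11 R0) (phi21 R0) /\
  is_solution R0 (phi12 R0) (phi22 R0) /\
  (forall s, 0 < s < PI -> phi11 R0 s * phi22 R0 s - phi12 R0 s * phi21 R0 s <> 0).

Definition c_under (R0 : R) : R :=
  3 * cos R0 * (csc R0)^2 / (3 + (sin R0)^2).

Definition h_formula (R0 s : R) : R :=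
  c_under R0 * ((1 + 2 * (csc R0)^2) * (sin s)^3
    + ((cos s)^2 - cos R0 * cos s - / 3 * (sin R0)^2) * sin s
      * Rpower (cot (s/2) / cot (R0/2)) (cos R0)).

(* Main.v *)
Require Import Defs.
From Coquelicot Require Import Coquelicot.
From Stdlib Require Import Reals Lra.
Open Scope R_scope.

Definition Pw (R0 s : R) := Rpower (cot (s/2)) (cos R0).

Lemma eq_mod (a b e X : R) : e = 0 -> a - b = e * X -> a = b.
Proof. intros H1 H2. rewrite H1 in H2. lra. Qed.

Lemma half_pos s : 0 < s < PI -> 0 < sin (s/2) /\ 0 < cos (s/2).
Proof. intros H. split. apply sin_gt_0; lra. apply cos_gt_0; lra. Qed.

Lemma sin_half s : sin s = 2 * sin (s/2) * cos (s/2).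
Proof. rewrite <- sin_2a. f_equal. field. Qed.

Lemma dPw R0 s : 0 < s < PI -> is_derive (Pw R0) s (- cos R0 * Pw R0 s / sin s).
Proof.
  intros H. destruct (half_pos s H) as [H1 H2].
  unfold Pw, Rpower, cot.
  auto_derive.
  - repeat split; try lra. apply Rdiv_lt_0_compat; lra.
  - rewrite (sin_half s). unfold Rdiv in *.
    set (a := sin (s * / 2)) in *. set (b := cos (s * / 2)) in *.
    set (E := exp _).
    apply (eq_mod _ _ (a^2+b^2-1) (- cos R0 * E / (2*a*b))).
    + unfold a, b. rewrite <- (sin2_cos2 (s * /2)). unfold Rsqr. ring.
    + field. lra.
Qed.

Lemma eq_mod2 (a b e1 e2 X Y : R) : e1 = 0 -> e2 = 0 -> a - b = e1 * X + e2 * Y -> a = b.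
Proof. intros H1 H2 H3. rewrite H1, H2 in H3. lra. Qed.

Lemma sin_pos s : 0 < s < PI -> 0 < sin s.
Proof. intros; apply sin_gt_0; lra. Qed.

Lemma pyth x : sin x ^ 2 + cos x ^ 2 - 1 = 0.
Proof. rewrite <- (sin2_cos2 x). unfold Rsqr. ring. Qed.

Lemma dphi12 R0 s : 0 < s < PI ->
  is_derive (phi12 R0) s (A11 R0 s * phi12 R0 s + A12 R0 s * phi22 R0 s).
Proof.
  intros H. pose proof (sin_pos s H) as HS.
  evar (dg : R).
  assert (Hg : is_derive (fun t => (1 - cos R0 * cos t + (cos t)^2) * (/ sin t)^2) s dg).
  { unfold dg. auto_derive. lra. reflexivity. }
  pose proof (is_derive_mult _ _ _ _ _ Hg (dPw R0 s H) Rmult_comm) as HH.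
  unfold dg in HH.
  match type of HH with is_derive _ _ ?d => replace (A11 R0 s * phi12 R0 s + A12 R0 s * phi22 R0 s) with d end.
  exact HH.
  simpl. unfold A11, A12, phi12, phi22, csc. fold (Pw R0 s).
  set (P := Pw R0 s). set (S := sin s). set (C := cos s). set (c := cos R0).
  apply (eq_mod2 _ _ (S^2 + C^2 - 1) (sin R0 ^2 + c^2 - 1) ((c - 2*C) * P / S^3) (C * P / S^3)).
  apply pyth. apply pyth.
  unfold plus, mult; simpl. field. unfold S; intro; lra.
Qed.

Lemma dphi22 R0 s : 0 < s < PI ->
  is_derive (phi22 R0) s (A21 R0 s * phi12 R0 s + A22 R0 s * phi22 R0 s).
Proof.
  intros H. pose proof (sin_pos s H) as HS.
  evar (dg : R).
  assert (Hg : is_derive (fun t => ((cos t)^2 - cos R0 * cos t - / 3 * (sin R0)^2) * (/ sin t)^2) s dg).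
  { unfold dg. auto_derive. lra. reflexivity. }
  pose proof (is_derive_mult _ _ _ _ _ Hg (dPw R0 s H) Rmult_comm) as HH.
  unfold dg in HH.
  match type of HH with is_derive _ _ ?d => replace (A21 R0 s * phi12 R0 s + A22 R0 s * phi22 R0 s) with d end.
  exact HH.
  simpl. unfold A21, A22, phi12, phi22, csc. fold (Pw R0 s).
  set (P := Pw R0 s). set (S := sin s). set (C := cos s). set (c := cos R0).
  apply (eq_mod2 _ _ (S^2 + C^2 - 1) (sin R0 ^2 + c^2 - 1) ((c - 2*C) * P / S^3) (C * P / S^3)).
  apply pyth. apply pyth.
  unfold plus, mult; simpl. field. unfold S; intro; lra.
Qed.

Ltac use_deriv HH :=
  match type of HH with is_derive _ _ ?d =>
  match goal with |- is_derive _ _ ?T =>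
    replace T with d; [exact HH | unfold minus, plus, mult, opp, zero; simpl] end end.

Lemma Pw_pos R0 s : 0 < Pw R0 s.
Proof. unfold Pw, Rpower. apply exp_pos. Qed.

Lemma phi_diff R0 s : 0 < s < PI ->
  phi12 R0 s - phi22 R0 s = (1 + / 3 * sin R0 ^ 2) * Pw R0 s / sin s ^ 2.
Proof.
  intros H. pose proof (sin_pos s H). unfold phi12, phi22, csc. fold (Pw R0 s).
  field. intro; lra.
Qed.

Lemma k_pos R0 : 0 < 1 + / 3 * sin R0 ^ 2.
Proof. pose proof (pow2_ge_0 (sin R0)). lra. Qed.

Lemma lin_sol R0 a b : is_solution R0 (fun s => a + b * phi12 R0 s) (fun s => a + b * phi22 R0 s).
Proof.
  intros s H; split; apply is_derive_Reals.
  - pose proof (is_derive_plus _ _ _ _ _ (is_derive_const a s) (is_derive_scal _ _ b _ (dphi12 R0 s H))) as HH.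
    use_deriv HH. unfold A11, A12. field. pose proof (sin_pos s H). intro; lra.
  - pose proof (is_derive_plus _ _ _ _ _ (is_derive_const a s) (is_derive_scal _ _ b _ (dphi22 R0 s H))) as HH.
    use_deriv HH. unfold A21, A22. field. pose proof (sin_pos s H). intro; lra.
Qed.

Lemma const_on (F : R -> R) : (forall t, 0 < t < PI -> is_derive F t 0) ->
  forall x y, 0 < x < PI -> 0 < y < PI -> F x = F y.
Proof.
  intros HF x y Hx Hy.
  destruct (Rtotal_order x y) as [Hl|[He|Hg]].
  - apply (eq_is_derive F x y); [|exact Hl]. intros t Ht. apply HF. lra.
  - subst; reflexivity.
  - symmetry. apply (eq_is_derive F y x); [|exact Hg]. intros t Ht. apply HF. lra.
Qed.

Lemma W_const R0 f1 f2 : is_solution R0 f1 f2 ->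
  forall x y, 0 < x < PI -> 0 < y < PI ->
  (f1 x - f2 x) * (sin x ^ 2 * / Pw R0 x) = (f1 y - f2 y) * (sin y ^ 2 * / Pw R0 y).
Proof.
  intros Hs. apply (const_on (fun t => (f1 t - f2 t) * (sin t ^ 2 * / Pw R0 t))).
  intros t Ht. destruct (Hs t Ht) as [D1 D2].
  apply is_derive_Reals in D1. apply is_derive_Reals in D2.
  pose proof (sin_pos t Ht) as HS. pose proof (Pw_pos R0 t) as HP.
  evar (dg : R).
  assert (Hg : is_derive (fun t => sin t ^ 2) t dg).
  { unfold dg. auto_derive. easy. reflexivity. }
  assert (HPn : Pw R0 t <> 0) by (intro; lra).
  pose proof (is_derive_inv _ _ _ (dPw R0 t Ht) HPn) as Hi.
  pose proof (is_derive_mult _ _ _ _ _ Hg Hi Rmult_comm) as HQ.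
  pose proof (is_derive_mult _ _ _ _ _ (is_derive_minus _ _ _ _ _ D1 D2) HQ Rmult_comm) as HH.
  unfold dg in HH.
  use_deriv HH. unfold A11, A12, A21, A22. field. split; intro; lra.
Qed.

Lemma V_const R0 f1 f2 : 0 < R0 < PI -> is_solution R0 f1 f2 ->
  forall x y, 0 < x < PI -> 0 < y < PI ->
  let w0 := (f1 R0 - f2 R0) * (sin R0 ^ 2 * / Pw R0 R0) in
  let k := 1 + / 3 * sin R0 ^ 2 in
  f2 x - w0 / k * phi22 R0 x = f2 y - w0 / k * phi22 R0 y.
Proof.
  intros HR Hs x y Hx Hy w0 k.
  apply (const_on (fun t => f2 t - w0 / k * phi22 R0 t)); auto.
  intros t Ht. destruct (Hs t Ht) as [D1 D2].
  apply is_derive_Reals in D2.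
  pose proof (sin_pos t Ht) as HS. pose proof (Pw_pos R0 t) as HP.
  pose proof (k_pos R0) as Hk. fold k in Hk.
  pose proof (is_derive_minus _ _ _ _ _ D2 (is_derive_scal _ _ (w0/k) _ (dphi22 R0 t Ht))) as HH.
  use_deriv HH.
  assert (HW : (f1 t - f2 t) * (sin t ^ 2 * / Pw R0 t) = w0) by (apply (W_const R0 f1 f2 Hs); auto).
  assert (Hf1 : f1 t = f2 t + w0 * Pw R0 t / sin t ^ 2).
  { rewrite <- HW. field. split; intro; lra. }
  assert (Hp : phi12 R0 t = phi22 R0 t + k * Pw R0 t / sin t ^ 2).
  { unfold k. rewrite <- (phi_diff R0 t Ht). ring. }
  rewrite Hf1, Hp. unfold A21, A22. field. split; intro; lra.
Qed.

Lemma cot_pos s : 0 < s < PI -> 0 < cot (s/2).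
Proof. intros H. destruct (half_pos s H). unfold cot. apply Rdiv_lt_0_compat; lra. Qed.

Lemma Rpow_ratio R0 s : 0 < s < PI -> 0 < R0 < PI ->
  Rpower (cot (s/2) / cot (R0/2)) (cos R0) = Pw R0 s / Pw R0 R0.
Proof.
  intros Hs HR. pose proof (cot_pos s Hs). pose proof (cot_pos R0 HR).
  unfold Pw, Rpower. rewrite ln_div by lra.
  replace (cos R0 * (ln (cot (s / 2)) - ln (cot (R0 / 2)))) with
    (cos R0 * ln (cot (s / 2)) + - (cos R0 * ln (cot (R0 / 2)))) by ring.
  rewrite exp_plus, exp_Ropp. reflexivity.
Qed.

Theorem propositionA1 (R0 : R) (hR : 0 < R0 < PI / 2) :
  fundamental_matrix R0 /\
  (exists f1 f2 : R -> R, is_solution R0 f1 f2 /\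
     f1 R0 * (sin R0)^4 = cos R0 * 3 /\ f2 R0 * (sin R0)^4 = cos R0 * 2) /\
  (forall f1 f2 : R -> R, is_solution R0 f1 f2 ->
     f1 R0 * (sin R0)^4 = cos R0 * 3 ->
     f2 R0 * (sin R0)^4 = cos R0 * 2 ->
     forall s, 0 < s < PI -> f2 s * (sin s)^3 = h_formula R0 s).
Proof.
  assert (HR : 0 < R0 < PI) by lra.
  pose proof (sin_pos R0 HR) as HSR. pose proof (Pw_pos R0 R0) as HP0.
  pose proof (k_pos R0) as Hk.
  split; [|split].
  - split; [|split].
    + intros s H; split; apply is_derive_Reals;
        pose proof (is_derive_const (1:R) s) as HH; use_deriv HH;
        [unfold A11, A12 | unfold A21, A22]; unfold phi11, phi21; field; pose proof (sin_pos s H); intro; lra.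
    + intros s H; split; apply is_derive_Reals; [apply dphi12 | apply dphi22]; auto.
    + intros s H. unfold phi11, phi21.
      replace (1 * phi22 R0 s - phi12 R0 s * 1) with (- (phi12 R0 s - phi22 R0 s)) by ring.
      rewrite (phi_diff R0 s H). pose proof (sin_pos s H). pose proof (Pw_pos R0 s).
      apply Ropp_neq_0_compat. apply Rgt_not_eq.
      apply Rdiv_lt_0_compat; [apply Rmult_lt_0_compat; lra | apply pow_lt; lra].
  - set (b := cos R0 / (sin R0 ^ 2 * Pw R0 R0) / (1 + / 3 * sin R0 ^ 2)).
    set (a := cos R0 * 2 / sin R0 ^ 4 - b * phi22 R0 R0).
    exists (fun s => a + b * phi12 R0 s), (fun s => a + b * phi22 R0 s).
    split; [apply lin_sol|].
    assert (Hp : phi12 R0 R0 = phi22 R0 R0 + (1 + / 3 * sin R0 ^ 2) * Pw R0 R0 / sin R0 ^ 2).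
    { rewrite <- (phi_diff R0 R0 HR). ring. }
    split; unfold a, b; try rewrite Hp; field; repeat split; intro; lra.
  - intros f1 f2 Hs H1 H2 s Hs'.
    pose proof (V_const R0 f1 f2 HR Hs s R0 Hs' HR) as HV. cbv zeta in HV.
    assert (E1 : f1 R0 = cos R0 * 3 / sin R0 ^ 4).
    { rewrite <- H1. field. intro; lra. }
    assert (E2 : f2 R0 = cos R0 * 2 / sin R0 ^ 4).
    { rewrite <- H2. field. intro; lra. }
    rewrite E1, E2 in HV.
    assert (Hf2 : f2 s = cos R0 * 2 / sin R0 ^ 4 -
      (cos R0 * 3 / sin R0 ^ 4 - cos R0 * 2 / sin R0 ^ 4) * (sin R0 ^ 2 * / Pw R0 R0) /
      (1 + / 3 * sin R0 ^ 2) * phi22 R0 R0 +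
      (cos R0 * 3 / sin R0 ^ 4 - cos R0 * 2 / sin R0 ^ 4) * (sin R0 ^ 2 * / Pw R0 R0) /
      (1 + / 3 * sin R0 ^ 2) * phi22 R0 s) by lra.
    rewrite Hf2. unfold h_formula, c_under, csc. rewrite (Rpow_ratio R0 s Hs' HR).
    unfold phi22, csc. fold (Pw R0 s). fold (Pw R0 R0).
    pose proof (sin_pos s Hs'). pose proof (Pw_pos R0 s).
    field. repeat split; intro; try lra.
Qed.
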